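(* Let $K$ be a field of characteristic $0$, let $E$ be a subfield of $K$, let $f,g\in K[X]$ have degree greater than one, and let $x_0,y_0\in K$. Assume that $(f,x_0)$ and $(g,y_0)$ are both isotrivial over $E$, and that $\mathcal{O}_f(x_0)\cap\mathcal{O}_g(y_0)$ is infinite. Then there exists a single linear $\mu\in\overline{K}[X]$ such that $\mu\circ f\circ\mu^{\circ(-1)}\in\overline{E}[X]$, $\mu\circ g\circ\mu^{\circ(-1)}\in\overline{E}[X]$, $\mu(x_0)\in\overline{E}$ and $\mu(y_0)\in\overline{E}$.
   Context: $\overline K$ is an algebraic closure of $K$ and $\overline E$ is the algebraic closure of $E$ inside $\overline K$. A linear polynomial has degree exactly $1$ and $\mu^{\circ(-1)}$ is its compositional inverse. For $\phi\in K[X]$ and $z\in K$, the pair $(\phi,z)$ is isotrivial over $E$ if there exists a linear $\ell\in\overline K[X]$ with $\ell\circ\phi\circ\ell^{\circ(-1)}\in\overline E[X]$ and $\ell(z)\in\overline E$. $\mathcal{O}_f(x_0)=\{f^{\circ n}(x_0):n\ge0\}$, where $f^{\circ n}$ is the $n$-th iterate. *)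

(* Defs.v *)
From HB Require Import structures.
From mathcomp Require Import all_boot all_order all_algebra.
Set Implicit Arguments. Unset Strict Implicit. Unset Printing Implicit Defensive.
Import GRing.Theory.
Local Open Scope ring_scope.

Definition linear_poly (L : fieldType) (l : {poly L}) : Prop := size l = 2%N.

(* Compositional inverse of a linear polynomial l = a X + b, namely a^-1 (X - b). *)
Definition lin_inv (L : fieldType) (l : {poly L}) : {poly L} :=
  (lead_coef l)^-1 *: ('X - (l`_0)%:P).

(* Conjugate l o phi o l^{o(-1)} (p \Po q is p o q in mathcomp). *)
Definition lconj (L : fieldType) (l phi : {poly L}) : {poly L} :=
  l \Po (phi \Po lin_inv l).

(* Algebraic closure of E inside L, where E embeds in L via e : E -> L. *)
Definition algclos_in (E L : fieldType) (e : E -> L) (z : L) : Prop :=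
  exists p : {poly E}, p != 0 /\ root (map_poly e p) z.

Definition poly_in (L : fieldType) (P : L -> Prop) (p : {poly L}) : Prop :=
  forall i, P p`_i.

Definition poly_orbit (K : fieldType) (f : {poly K}) (x0 z : K) : Prop :=
  exists n : nat, z = iter n (fun x => f.[x]) x0.

(* Isotriviality of (phi, z) over E, with Kbar = L via iota : K -> L and
   E embedded in K via j : E -> K. *)
Definition isotrivial (E K L : fieldType) (j : {rmorphism E -> K})
  (iota : {rmorphism K -> L}) (phi : {poly K}) (z : K) : Prop :=
  exists l : {poly L}, linear_poly l /\
    poly_in (algclos_in (iota \o j)) (lconj l (map_poly iota phi)) /\
    algclos_in (iota \o j) l.[iota z].

(* Main.v *)
Require Import Defs.
From HB Require Import structures.
From mathcomp Require Import all_boot all_order all_algebra.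
From Stdlib Require Import Classical.
Import GRing.Theory.
Local Open Scope ring_scope.

Section Alg.
Variables (E L : fieldType) (e : {rmorphism E -> L}).
Local Notation A := (algclos_in e).

Lemma algE z : A z <-> algebraicOver e z.
Proof. by split => [[p [h1 h2]]|[p h1 h2]]; exists p. Qed.

Lemma A0 : A 0. Proof. exact/algE/algebraic0. Qed.
Lemma A1 : A 1. Proof. exact/algE/algebraic1. Qed.
Lemma AD x y : A x -> A y -> A (x + y).
Proof. by move=> /algE hx /algE hy; apply/algE/algebraic_add. Qed.
Lemma AN x : A x -> A (- x).
Proof. by move=> /algE hx; apply/algE/algebraic_opp. Qed.
Lemma AB x y : A x -> A y -> A (x - y).
Proof. by move=> hx hy; apply: AD => //; apply: AN. Qed.
Lemma AM x y : A x -> A y -> A (x * y).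
Proof. by move=> /algE hx /algE hy; apply/algE/algebraic_mul. Qed.
Lemma AV x : A x -> A x^-1.
Proof. by move=> /algE hx; apply/algE/algebraic_inv. Qed.
Lemma AX x n : A x -> A (x ^+ n).
Proof. move=> hx; elim: n => [|n IH]; rewrite ?expr0 ?exprS; [exact: A1| exact: AM]. Qed.

Lemma Asum (I : Type) (r : seq I) (P : pred I) (F : I -> L) :
  (forall i, P i -> A (F i)) -> A (\sum_(i <- r | P i) F i).
Proof. move=> h; elim/big_rec: _ => [|i x Pi hx]; [exact: A0 | apply: AD => //; exact: h]. Qed.

Lemma horner_in p x : poly_in A p -> A x -> A p.[x].
Proof.
move=> hp hx; rewrite horner_coef; apply: Asum => i _; apply: AM => //; exact: AX.
Qed.

Lemma PC a : A a -> poly_in A a%:P.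
Proof. by move=> ha i; rewrite coefC; case: ifP => _ //; apply: A0. Qed.
Lemma PX : poly_in A 'X.
Proof. by move=> i; rewrite coefX; case: (i == 1%N); rewrite ?mulr1n ?mulr0n; [apply: A1 | apply: A0]. Qed.
Lemma PD p q : poly_in A p -> poly_in A q -> poly_in A (p + q).
Proof. by move=> hp hq i; rewrite coefD; apply: AD. Qed.
Lemma PB p q : poly_in A p -> poly_in A q -> poly_in A (p - q).
Proof. by move=> hp hq i; rewrite coefB; apply: AB. Qed.
Lemma PZ a p : A a -> poly_in A p -> poly_in A (a *: p).
Proof. by move=> ha hp i; rewrite coefZ; apply: AM. Qed.
Lemma PM p q : poly_in A p -> poly_in A q -> poly_in A (p * q).
Proof. by move=> hp hq i; rewrite coefM; apply: Asum => k _; apply: AM. Qed.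
Lemma PXn p n : poly_in A p -> poly_in A (p ^+ n).
Proof.
move=> hp; elim: n => [|n IH]; rewrite ?expr0 ?exprS; [rewrite -polyC1; apply: PC; exact: A1| exact: PM].
Qed.
Lemma Pcomp p q : poly_in A p -> poly_in A q -> poly_in A (p \Po q).
Proof.
move=> hp hq i; rewrite comp_polyE coef_sum; apply: Asum => k _.
by rewrite coefZ; apply: AM => //; apply: PXn.
Qed.
End Alg.

Section Lin.
Variable (L : fieldType).
Implicit Types l p q : {poly L}.

Lemma lin_decomp {l} : size l = 2%N -> l = l`_1 *: 'X + (l`_0)%:P.
Proof.
move=> hs; apply/polyP => i; rewrite coefD coefZ coefX coefC.
case: i => [|[|i]] /=; rewrite ?mulr0 ?mulr1 ?add0r ?addr0 //.
by rewrite nth_default // hs.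
Qed.

Lemma lin_lead {l} : size l = 2%N -> lead_coef l = l`_1.
Proof. by move=> hs; rewrite lead_coefE hs. Qed.

Lemma lin_nz {l} : size l = 2%N -> l`_1 != 0.
Proof. by move=> hs; rewrite -lin_lead // lead_coef_eq0 -size_poly_eq0 hs. Qed.

Lemma comp_lin a b q : (a *: 'X + b%:P) \Po q = a *: q + b%:P.
Proof. by rewrite comp_polyD comp_polyZ comp_polyX comp_polyC. Qed.

Lemma lin_comp_inv l : size l = 2%N -> l \Po lin_inv l = 'X.
Proof.
move=> hs; rewrite {2}(lin_decomp hs) comp_lin /lin_inv lin_lead // scalerA.
by rewrite mulfV ?lin_nz // scale1r subrK.
Qed.

Lemma lin_inv_eval l x : size l = 2%N -> (lin_inv l).[l.[x]] = x.
Proof.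
move=> hs; rewrite -horner_comp.
rewrite {1}(lin_decomp hs) /lin_inv comp_polyZ comp_polyB comp_polyX comp_polyC.
rewrite lin_lead // addrK scalerA mulVf ?lin_nz // scale1r hornerX //.
Qed.

Lemma lin_cancel l p q : size l = 2%N -> l \Po p = l \Po q -> p = q.
Proof.
move=> hs; rewrite (lin_decomp hs) !comp_lin => /addIr.
by move/(congr1 ( *:%R (l`_1)^-1)); rewrite !scalerK ?lin_nz.
Qed.

Lemma lconj_eval l p x : size l = 2%N -> (lconj l p).[l.[x]] = l.[p.[x]].
Proof. by move=> hs; rewrite /lconj !horner_comp lin_inv_eval. Qed.
End Lin.
Arguments lin_decomp {L l}.
Arguments lin_lead {L l}.
Arguments lin_nz {L l}.
Arguments lin_cancel {L l p q}.

Lemma orbit_alg (E K L : fieldType) (j : {rmorphism E -> K}) (iota : {rmorphism K -> L})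
  (f : {poly K}) (l : {poly L}) x n :
  size l = 2%N -> poly_in (algclos_in (iota \o j)) (lconj l (map_poly iota f)) ->
  algclos_in (iota \o j) l.[iota x] ->
  algclos_in (iota \o j) l.[iota (iter n (fun x => f.[x]) x)].
Proof.
move=> hs hp hx; elim: n => [|n IH] //=.
by rewrite -horner_map -lconj_eval //; apply: horner_in.
Qed.

Lemma two_points (K : eqType) (P : K -> Prop) :
  ~ (exists s : seq K, forall z, P z -> z \in s) ->
  exists z1 z2, P z1 /\ P z2 /\ z1 != z2.
Proof.
move=> h; apply: NNPP => hn; apply: h.
case: (classic (exists z, P z)) => [[z1 Pz1]|hno].
  exists [:: z1] => z Pz; rewrite inE; apply/eqP; apply: NNPP => hne.
  by apply: hn; exists z, z1; split => //; split => //; apply/eqP.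
by exists [::] => z Pz; exfalso; apply: hno; exists z.
Qed.

Theorem mainTheorem14
  (K : fieldType) (E : fieldType) (j : {rmorphism E -> K})
  (L : closedFieldType) (iota : {rmorphism K -> L})
  (Lalg : forall z : L, exists p : {poly K}, p != 0 /\ root (map_poly iota p) z)
  (char0 : [pchar K] =i pred0)
  (f g : {poly K}) (x0 y0 : K)
  (hf : (2 < size f)%N) (hg : (2 < size g)%N)
  (isof : isotrivial j iota f x0) (isog : isotrivial j iota g y0)
  (hinf : ~ exists s : seq K,
            forall z : K, poly_orbit f x0 z -> poly_orbit g y0 z -> z \in s) :
  exists mu : {poly L}, linear_poly mu /\
    poly_in (algclos_in (iota \o j)) (lconj mu (map_poly iota f)) /\
    poly_in (algclos_in (iota \o j)) (lconj mu (map_poly iota g)) /\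
    algclos_in (iota \o j) mu.[iota x0] /\
    algclos_in (iota \o j) mu.[iota y0].
Proof.
move: isof isog => [l1 [hl1 [hF hx]]] [l2 [hl2 [hG hy]]].
rewrite /linear_poly in hl1 hl2.
have hinf' : ~ exists s : seq K, forall z : K,
    (poly_orbit f x0 z /\ poly_orbit g y0 z) -> z \in s.
  by move=> [s hs]; apply: hinf; exists s => z h1 h2; apply: hs.
have [z1 [z2 [[[n1 e1] [m1 e1']] [[[n2 e2] [m2 e2']] hne]]]] := @two_points K _ hinf'.
have p1 : algclos_in (iota \o j) l1.[iota z1] by rewrite e1; apply: orbit_alg.
have p2 : algclos_in (iota \o j) l1.[iota z2] by rewrite e2; apply: orbit_alg.
have q1 : algclos_in (iota \o j) l2.[iota z1] by rewrite e1'; apply: orbit_alg.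
have q2 : algclos_in (iota \o j) l2.[iota z2] by rewrite e2'; apply: orbit_alg.
have ev (l : {poly L}) u : size l = 2%N -> l.[u] = l`_1 * u + l`_0.
  by move=> hs; rewrite {1}(lin_decomp hs) hornerD hornerZ hornerX hornerC.
set u1 := iota z1; set u2 := iota z2.
have hu : u1 - u2 != 0 by rewrite subr_eq0 (inj_eq (fmorph_inj iota)).
have dif (l : {poly L}) : size l = 2%N -> l.[u1] - l.[u2] = l`_1 * (u1 - u2).
  by move=> hs; rewrite !ev // opprD addrACA subrr addr0 mulrBr.
set alpha := l1`_1 / l2`_1.
set beta := l1`_0 - alpha * l2`_0.
have nz2 := lin_nz hl2.
have aa2 : alpha * l2`_1 = l1`_1 by rewrite divfK.
have Aalpha : algclos_in (iota \o j) alpha.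
  have -> : alpha = (l1.[u1] - l1.[u2]) / (l2.[u1] - l2.[u2]).
    by rewrite !dif // invfM mulrACA divff // mulr1.
  by apply: AM; [apply: AB | apply/AV/AB].
have Abeta : algclos_in (iota \o j) beta.
  have -> : beta = l1.[u1] - alpha * l2.[u1].
    rewrite !ev // mulrDr mulrA aa2 [l1`_1 * u1 + _]addrC addrKA //.
  by apply: AB => //; apply: AM.
have nza : alpha != 0 by rewrite mulf_neq0 ?invr_eq0 ?lin_nz.
set c := alpha *: 'X + beta%:P.
have hc : size c = 2%N.
  by rewrite /c -mul_polyC size_MXaddC polyC_eq0 (negPf nza) /= size_polyC nza.
have Pc : poly_in (algclos_in (iota \o j)) c.
  by apply: PD; [apply: PZ => //; apply: PX | apply: PC].
have ec : c \Po l2 = l1.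
  rewrite comp_lin {1}(lin_decomp hl2) [RHS](lin_decomp hl1) scalerDr scalerA.
  rewrite -[alpha *: _%:P]mul_polyC -polyCM -addrA -polyCD aa2.
  by rewrite [alpha * _ + _]addrC subrK.
have linv : lin_inv l1 = lin_inv l2 \Po lin_inv c.
  apply: (lin_cancel hl1); rewrite lin_comp_inv // -ec.
  by rewrite -comp_polyA [l2 \Po _]comp_polyA lin_comp_inv // comp_polyX lin_comp_inv.
have Pinvc : poly_in (algclos_in (iota \o j)) (lin_inv c).
  rewrite /lin_inv; apply: PZ; first by apply: AV; rewrite lead_coefE; apply: Pc.
  by apply: PB; [apply: PX | apply: PC; apply: Pc].
exists l1; split => //; split => //; split; last split => //.
  have -> : lconj l1 (map_poly iota g) =
      c \Po (lconj l2 (map_poly iota g) \Po lin_inv c).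
    by rewrite /lconj linv -ec !comp_polyA.
  by apply: Pcomp => //; apply: Pcomp.
by rewrite -ec horner_comp; apply: horner_in.
Qed.
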